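(* Let $\mathbf{w}_1,\dots,\mathbf{w}_6:\mathbb{R}\to\mathbb{R}^7$ be differentiable functions satisfying $$\tfrac{d\mathbf{w}_1}{dt}=2\mathbf{w}_2\times\mathbf{w}_3,\quad \tfrac{d\mathbf{w}_2}{dt}=2\mathbf{w}_1\times\mathbf{w}_3,\quad \tfrac{d\mathbf{w}_3}{dt}=-2\mathbf{w}_1\times\mathbf{w}_2,$$ $$\tfrac{d\mathbf{w}_4}{dt}=\mathbf{w}_1\times\mathbf{w}_5+\mathbf{w}_2\times\mathbf{w}_5-\mathbf{w}_3\times\mathbf{w}_4,\quad \tfrac{d\mathbf{w}_5}{dt}=-\mathbf{w}_1\times\mathbf{w}_4+\mathbf{w}_2\times\mathbf{w}_4+\mathbf{w}_3\times\mathbf{w}_5,\quad \tfrac{d\mathbf{w}_6}{dt}=\mathbf{w}_4\times\mathbf{w}_5 .$$ Then $$M=\Big\{\tfrac12(y_1^2+y_2^2)\mathbf{w}_1(t)+\tfrac12(y_1^2-y_2^2)\mathbf{w}_2(t)+y_1y_2\mathbf{w}_3(t)+y_1\mathbf{w}_4(t)+y_2\mathbf{w}_5(t)+\mathbf{w}_6(t):y_1,y_2,t\in\mathbb{R}\Big\}$$ is an associative 3-fold in $\mathbb{R}^7$ wherever it is nonsingular.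
   Context: Let $(x_1,\dots,x_7)$ be coordinates on $\mathbb{R}^7$ with Euclidean metric $g$, and write $dx_{ijk}=dx_i\wedge dx_j\wedge dx_k$. Define $\varphi=dx_{123}+dx_{145}+dx_{167}+dx_{246}-dx_{257}-dx_{347}-dx_{356}$. The cross product $\times$ on $\mathbb{R}^7$ is defined by $g(u\times v,w)=\varphi(u,v,w)$ for all $u,v,w\in\mathbb{R}^7$. An oriented 3-dimensional (immersed) submanifold $N\subseteq\mathbb{R}^7$ is an associative 3-fold if $\varphi|_{T_xN}=\mathrm{vol}_{T_xN}$ for all $x\in N$. *)

(* Defs.v *)
From HB Require Import structures.
From mathcomp Require Import all_boot all_order all_algebra.
From mathcomp Require Import all_classical all_reals all_analysis.
Set Implicit Arguments. Unset Strict Implicit. Unset Printing Implicit Defensive.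
Import Order.TTheory GRing.Theory Num.Theory.
Import numFieldNormedType.Exports.
Local Open Scope ring_scope.

Section G2.
Variable R : realType.

(* 1-based coordinate access: coord u i = x_i(u), i in 1..7 *)
Definition coord (u : 'rV[R]_7) (i : nat) : R := u 0 (inord i.-1).

Definition dx (i j k : nat) (u v w : 'rV[R]_7) : R :=
  let idx (a : 'I_3) := nth 0%N [:: i; j; k] a in
  let vec (a : 'I_3) := nth u [:: u; v; w] a in
  \det (\matrix_(a < 3, b < 3) coord (vec a) (idx b)).

Definition phi (u v w : 'rV[R]_7) : R :=
  dx 1 2 3 u v w + dx 1 4 5 u v w + dx 1 6 7 u v w + dx 2 4 6 u v w
  - dx 2 5 7 u v w - dx 3 4 7 u v w - dx 3 5 6 u v w.

Definition ebasis (k : 'I_7) : 'rV[R]_7 := delta_mx 0 k.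

(* Cross product: g(u x v, w) = phi(u,v,w), i.e. (u x v)_k = phi(u,v,e_k) *)
Definition cross (u v : 'rV[R]_7) : 'rV[R]_7 := \row_k phi u v (ebasis k).

Definition mx3 (u v w : 'rV[R]_7) : 'M[R]_(3, 7) :=
  \matrix_(a < 3) nth u [:: u; v; w] a.

(* The oriented 3-plane spanned by the basis (u,v,w), with one of its two
   orientations, is calibrated by phi: phi restricted to the plane equals the
   volume form. The volume form of span(u,v,w) evaluated on (u,v,w) is
   +- sqrt(det Gram(u,v,w)), the sign depending on the chosen orientation. *)
Definition associative_plane (u v w : 'rV[R]_7) : Prop :=
  exists s : R, (s = 1 \/ s = -1) /\
    phi u v w = s * Num.sqrt (\det (mx3 u v w *m (mx3 u v w)^T)).

End G2.

Definition paramM (R : realType) (w1 w2 w3 w4 w5 w6 : R -> 'rV[R]_7)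
    (y1 y2 t : R) : 'rV[R]_7 :=
  (2^-1 * (y1 ^+ 2 + y2 ^+ 2)) *: w1 t + (2^-1 * (y1 ^+ 2 - y2 ^+ 2)) *: w2 t
  + (y1 * y2) *: w3 t + y1 *: w4 t + y2 *: w5 t + w6 t.

(* Main.v *)
Require Import Defs.
From HB Require Import structures.
From mathcomp Require Import all_boot all_order all_algebra.
From mathcomp Require Import all_classical all_reals all_analysis.
From mathcomp Require Import ring lra.
Import Order.TTheory GRing.Theory Num.Theory.
Import numFieldNormedType.Exports.
Local Open Scope ring_scope.

Lemma is_derive_scalel (R : realType) (V : normedModType R) (f : R -> R) (c : V) x df :
  is_derive x (1:R) f df -> is_derive x (1:R) (fun s => f s *: c) (df *: c).
Proof.
move=> H.
have df1 : differentiable f x by apply/derivable1_diffP; exact: ex_derive.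
have dsc : differentiable ( *:%R ^~ c : R -> V) (f x).
  exact: (@ex_diff _ _ _ _ _ _ _ (@is_diff_scalel R V (f x) c)).
have dg : differentiable (( *:%R ^~ c) \o f) x by apply: differentiable_comp.
apply: DeriveDef.
  exact: (diff_derivable dg).
have -> : (fun s => f s *: c) = ( *:%R ^~ c) \o f by [].
rewrite deriveE // diff_comp //.
rewrite (@diff_val _ _ _ _ _ _ _ (@is_diff_scalel R V (f x) c)) /=.
by rewrite -deriveE // derive_val.
Qed.
#[local] Existing Instance is_derive_scalel.

Lemma dY1 (R : realType) (w1 w2 w3 w4 w5 w6 : R -> 'rV[R]_7) y1 y2 t :
  derive1 (fun s => paramM w1 w2 w3 w4 w5 w6 s y2 t) y1 =
  y1 *: w1 t + y1 *: w2 t + y2 *: w3 t + w4 t.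
Proof.
rewrite derive1E /paramM.
apply: derive_val.
apply: is_derive_eq.


have E1 : (2^-1 *: (y1%:A + y1%:A + 0) : R) = y1.
  change (2^-1 * (y1 * 1 + y1 * 1 + 0) = y1); by field.
have E2 : (2^-1 *: (y1%:A + y1%:A - 0) : R) = y1.
  change (2^-1 * (y1 * 1 + y1 * 1 - 0) = y1); by field.
have E3 : (1 *: y2 : R) = y2 by exact: scale1r.
rewrite E1 E2 E3 scale1r.
by rewrite !addr0.
Qed.

Lemma dY2 (R : realType) (w1 w2 w3 w4 w5 w6 : R -> 'rV[R]_7) y1 y2 t :
  derive1 (fun s => paramM w1 w2 w3 w4 w5 w6 y1 s t) y2 =
  y2 *: w1 t - y2 *: w2 t + y1 *: w3 t + w5 t.
Proof.
rewrite derive1E /paramM.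
apply: derive_val.
apply: is_derive_eq.
have E1 : (2^-1 *: ((0 + 1) * (y2%:A + y2%:A)) : R) = y2.
  change (2^-1 * ((0 + 1) * (y2 * 1 + y2 * 1)) = y2); by field.
have E2 : (2^-1 *: ((0 + 1) * - (y2%:A + y2%:A)) : R) = - y2.
  change (2^-1 * ((0 + 1) * - (y2 * 1 + y2 * 1)) = - y2); by field.
have E3 : (y1%:A : R) = y1 by exact: mulr1.
by rewrite E1 E2 E3 scale1r !addr0 scaleNr.
Qed.

Lemma dT (R : realType) (w1 w2 w3 w4 w5 w6 : R -> 'rV[R]_7) y1 y2 t d1 d2 d3 d4 d5 d6 :
  (forall t : R, is_derive t (1 : R) w1 (d1 t)) ->
  (forall t : R, is_derive t (1 : R) w2 (d2 t)) ->
  (forall t : R, is_derive t (1 : R) w3 (d3 t)) ->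
  (forall t : R, is_derive t (1 : R) w4 (d4 t)) ->
  (forall t : R, is_derive t (1 : R) w5 (d5 t)) ->
  (forall t : R, is_derive t (1 : R) w6 (d6 t)) ->
  derive1 (fun s => paramM w1 w2 w3 w4 w5 w6 y1 y2 s) t =
  (2^-1 * (y1 ^+ 2 + y2 ^+ 2)) *: d1 t + (2^-1 * (y1 ^+ 2 - y2 ^+ 2)) *: d2 t
  + (y1 * y2) *: d3 t + y1 *: d4 t + y2 *: d5 t + d6 t.
Proof.
move=> H1 H2 H3 H4 H5 H6.
rewrite derive1E /paramM.
exact: derive_val.
Qed.

Lemma det3f (R : comRingType) (f : nat -> nat -> R) :
  \det (\matrix_(i < 3, j < 3) f i j) =
  f 0 0 * (f 1 1 * f 2 2 - f 1 2 * f 2 1)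
  - f 0 1 * (f 1 0 * f 2 2 - f 1 2 * f 2 0)
  + f 0 2 * (f 1 0 * f 2 1 - f 1 1 * f 2 0).
Proof.
rewrite (expand_det_row _ ord0) !big_ord_recl big_ord0 /cofactor.
rewrite !(expand_det_row _ ord0) !big_ord_recl !big_ord0 /cofactor !det_mx11.
rewrite !mxE /=.
rewrite /bump /= !add0n.
ring.
Qed.

Section S.
Variable R : realType.
Implicit Types u v w : 'rV[R]_7.

Lemma dxE i j k u v w : dx i j k u v w =
  Defs.coord u i * (Defs.coord v j * Defs.coord w k - Defs.coord v k * Defs.coord w j)
  - Defs.coord u j * (Defs.coord v i * Defs.coord w k - Defs.coord v k * Defs.coord w i)
  + Defs.coord u k * (Defs.coord v i * Defs.coord w j - Defs.coord v j * Defs.coord w i).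
Proof.
rewrite /dx /=.
by rewrite (@det3f _ (fun a b => Defs.coord (nth u [:: u; v; w] a) (nth 0%N [:: i; j; k] b))).
Qed.

Lemma phiE u v w : phi u v w = Defs.coord w 1 * ((Defs.coord u 2 * Defs.coord v 3 - Defs.coord u 3 * Defs.coord v 2) + (Defs.coord u 4 * Defs.coord v 5 - Defs.coord u 5 * Defs.coord v 4) + (Defs.coord u 6 * Defs.coord v 7 - Defs.coord u 7 * Defs.coord v 6)) + Defs.coord w 2 * (- (Defs.coord u 1 * Defs.coord v 3 - Defs.coord u 3 * Defs.coord v 1) + (Defs.coord u 4 * Defs.coord v 6 - Defs.coord u 6 * Defs.coord v 4) - (Defs.coord u 5 * Defs.coord v 7 - Defs.coord u 7 * Defs.coord v 5)) + Defs.coord w 3 * ((Defs.coord u 1 * Defs.coord v 2 - Defs.coord u 2 * Defs.coord v 1) - (Defs.coord u 4 * Defs.coord v 7 - Defs.coord u 7 * Defs.coord v 4) - (Defs.coord u 5 * Defs.coord v 6 - Defs.coord u 6 * Defs.coord v 5)) + Defs.coord w 4 * (- (Defs.coord u 1 * Defs.coord v 5 - Defs.coord u 5 * Defs.coord v 1) - (Defs.coord u 2 * Defs.coord v 6 - Defs.coord u 6 * Defs.coord v 2) + (Defs.coord u 3 * Defs.coord v 7 - Defs.coord u 7 * Defs.coord v 3)) + Defs.coord w 5 * ((Defs.coord u 1 * Defs.coord v 4 - Defs.coord u 4 * Defs.coord v 1) + (Defs.coord u 2 * Defs.coord v 7 - Defs.coord u 7 * Defs.coord v 2) + (Defs.coord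 u 3 * Defs.coord v 6 - Defs.coord u 6 * Defs.coord v 3)) + Defs.coord w 6 * (- (Defs.coord u 1 * Defs.coord v 7 - Defs.coord u 7 * Defs.coord v 1) + (Defs.coord u 2 * Defs.coord v 4 - Defs.coord u 4 * Defs.coord v 2) - (Defs.coord u 3 * Defs.coord v 5 - Defs.coord u 5 * Defs.coord v 3)) + Defs.coord w 7 * ((Defs.coord u 1 * Defs.coord v 6 - Defs.coord u 6 * Defs.coord v 1) - (Defs.coord u 2 * Defs.coord v 5 - Defs.coord u 5 * Defs.coord v 2) - (Defs.coord u 3 * Defs.coord v 4 - Defs.coord u 4 * Defs.coord v 3)).
Proof. rewrite /phi !dxE; ring. Qed.

Lemma coordD u v n : Defs.coord (u + v) n = Defs.coord u n + Defs.coord v n.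
Proof. by rewrite /Defs.coord !mxE. Qed.
Lemma coordB u v n : Defs.coord (u - v) n = Defs.coord u n - Defs.coord v n.
Proof. by rewrite /Defs.coord !mxE. Qed.
Lemma coordN u n : Defs.coord (- u) n = - Defs.coord u n.
Proof. by rewrite /Defs.coord !mxE. Qed.
Lemma coordZ a u n : Defs.coord (a *: u) n = a * Defs.coord u n.
Proof. by rewrite /Defs.coord !mxE. Qed.

Lemma coord_ebasis n m : (0 < n < 8)%N -> (0 < m < 8)%N ->
  Defs.coord (ebasis R (inord n.-1)) m = (n == m)%:R.
Proof.
move=> /andP[n0 n8] /andP[m0 m8].
rewrite /Defs.coord /ebasis mxE eqxx /=.
rewrite -(inj_eq val_inj) /= !inordK; last 2 first.
- by case: n n0 n8 {m0 m8} => [|n].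
- by case: m m0 m8 => [|m].
case: n n0 n8 => [|n] //; case: m m0 m8 => [|m] //= _ _ _ _.
by rewrite eqSS eq_sym.
Qed.

Lemma crossE n u v : Defs.coord (cross u v) n = phi u v (ebasis R (inord n.-1)).
Proof. by rewrite /Defs.coord /cross mxE. Qed.

Lemma cross1 u v : Defs.coord (cross u v) 1 = (Defs.coord u 2 * Defs.coord v 3 - Defs.coord u 3 * Defs.coord v 2) + (Defs.coord u 4 * Defs.coord v 5 - Defs.coord u 5 * Defs.coord v 4) + (Defs.coord u 6 * Defs.coord v 7 - Defs.coord u 7 * Defs.coord v 6).
Proof.
rewrite crossE phiE !coord_ebasis //=.
ring.
Qed.

Lemma cross2 u v : Defs.coord (cross u v) 2 = - (Defs.coord u 1 * Defs.coord v 3 - Defs.coord u 3 * Defs.coord v 1) + (Defs.coord u 4 * Defs.coord v 6 - Defs.coord u 6 * Defs.coord v 4) - (Defs.coord u 5 * Defs.coord v 7 - Defs.coord u 7 * Defs.coord v 5).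
Proof.
rewrite crossE phiE !coord_ebasis //=.
ring.
Qed.

Lemma cross3 u v : Defs.coord (cross u v) 3 = (Defs.coord u 1 * Defs.coord v 2 - Defs.coord u 2 * Defs.coord v 1) - (Defs.coord u 4 * Defs.coord v 7 - Defs.coord u 7 * Defs.coord v 4) - (Defs.coord u 5 * Defs.coord v 6 - Defs.coord u 6 * Defs.coord v 5).
Proof.
rewrite crossE phiE !coord_ebasis //=.
ring.
Qed.

Lemma cross4 u v : Defs.coord (cross u v) 4 = - (Defs.coord u 1 * Defs.coord v 5 - Defs.coord u 5 * Defs.coord v 1) - (Defs.coord u 2 * Defs.coord v 6 - Defs.coord u 6 * Defs.coord v 2) + (Defs.coord u 3 * Defs.coord v 7 - Defs.coord u 7 * Defs.coord v 3).
Proof.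
rewrite crossE phiE !coord_ebasis //=.
ring.
Qed.

Lemma cross5 u v : Defs.coord (cross u v) 5 = (Defs.coord u 1 * Defs.coord v 4 - Defs.coord u 4 * Defs.coord v 1) + (Defs.coord u 2 * Defs.coord v 7 - Defs.coord u 7 * Defs.coord v 2) + (Defs.coord u 3 * Defs.coord v 6 - Defs.coord u 6 * Defs.coord v 3).
Proof.
rewrite crossE phiE !coord_ebasis //=.
ring.
Qed.

Lemma cross6 u v : Defs.coord (cross u v) 6 = - (Defs.coord u 1 * Defs.coord v 7 - Defs.coord u 7 * Defs.coord v 1) + (Defs.coord u 2 * Defs.coord v 4 - Defs.coord u 4 * Defs.coord v 2) - (Defs.coord u 3 * Defs.coord v 5 - Defs.coord u 5 * Defs.coord v 3).
Proof.
rewrite crossE phiE !coord_ebasis //=.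
ring.
Qed.

Lemma cross7 u v : Defs.coord (cross u v) 7 = (Defs.coord u 1 * Defs.coord v 6 - Defs.coord u 6 * Defs.coord v 1) - (Defs.coord u 2 * Defs.coord v 5 - Defs.coord u 5 * Defs.coord v 2) - (Defs.coord u 3 * Defs.coord v 4 - Defs.coord u 4 * Defs.coord v 3).
Proof.
rewrite crossE phiE !coord_ebasis //=.
ring.
Qed.



Lemma row7 u v : Defs.coord u 1 = Defs.coord v 1 -> Defs.coord u 2 = Defs.coord v 2 ->
  Defs.coord u 3 = Defs.coord v 3 -> Defs.coord u 4 = Defs.coord v 4 -> Defs.coord u 5 = Defs.coord v 5 ->
  Defs.coord u 6 = Defs.coord v 6 -> Defs.coord u 7 = Defs.coord v 7 -> u = v.
Proof.
move=> H1 H2 H3 H4 H5 H6 H7; apply/rowP => k.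
have E : forall w : 'rV[R]_7, w 0 k = Defs.coord w k.+1.
  by move=> w; rewrite /Defs.coord /= inord_val.
rewrite !E {E}.
by case: k => [[|[|[|[|[|[|[|m]]]]]]] Hm].
Qed.

End S.

Section T.
Variable R : realType.
Implicit Types u v w : 'rV[R]_7.

Definition dot u v : R := \sum_(k < 7) u 0 k * v 0 k.

Lemma dotE u v : dot u v = \sum_(0 <= n < 7) Defs.coord u n.+1 * Defs.coord v n.+1.
Proof.
rewrite big_mkord /dot; apply: eq_bigr => k _.
by rewrite /Defs.coord /= inord_val.
Qed.

Lemma dotE7 u v : dot u v = Defs.coord u 1 * Defs.coord v 1 + Defs.coord u 2 * Defs.coord v 2
  + Defs.coord u 3 * Defs.coord v 3 + Defs.coord u 4 * Defs.coord v 4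
  + Defs.coord u 5 * Defs.coord v 5 + Defs.coord u 6 * Defs.coord v 6
  + Defs.coord u 7 * Defs.coord v 7.
Proof.
rewrite dotE !big_nat_recl // big_geq //.
rewrite !addrA addr0 //.
Qed.

Lemma dot_ge0 u : 0 <= dot u u.
Proof. rewrite /dot; apply: sumr_ge0 => k _; exact: sqr_ge0. Qed.

Lemma gramE u v w : mx3 u v w *m (mx3 u v w)^T =
  \matrix_(a < 3, b < 3) dot (nth u [:: u; v; w] a) (nth u [:: u; v; w] b).
Proof.
apply/matrixP => a b; rewrite !mxE; apply: eq_bigr => k _; by rewrite !mxE.
Qed.

Lemma assoc_cross u v : associative_plane u v (cross u v).
Proof.
set w := cross u v.
have L1 : dot u w = 0.
  rewrite dotE7 /w cross1 cross2 cross3 cross4 cross5 cross6 cross7; ring.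
have L2 : dot v w = 0.
  rewrite dotE7 /w cross1 cross2 cross3 cross4 cross5 cross6 cross7; ring.
have L3 : dot w w = dot u u * dot v v - dot u v ^+ 2.
  rewrite !dotE7 /w cross1 cross2 cross3 cross4 cross5 cross6 cross7; ring.
have L4 : phi u v w = dot w w.
  rewrite phiE dotE7 /w cross1 cross2 cross3 cross4 cross5 cross6 cross7; ring.
have C : forall a b, dot a b = dot b a.
  by move=> a b; rewrite !dotE7; ring.
exists 1; split; first by left.
rewrite gramE.
rewrite (@det3f _ (fun a b => dot (nth u [:: u; v; w] a) (nth u [:: u; v; w] b))) /=.
rewrite (C w u) (C w v) L1 L2 L4.
have -> : dot u u * (dot v v * dot w w - 0 * 0) - dot u v * (dot v u * dot w w - 0 * 0)
   + 0 * (dot v u * 0 - dot v v * 0) = dot w w ^+ 2.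
  by rewrite L3 (C v u); ring.
by rewrite sqrtr_sqr mul1r ger0_norm // dot_ge0.
Qed.

End T.

Theorem theorem5p3 (R : realType) (w1 w2 w3 w4 w5 w6 : R -> 'rV[R]_7) :
  (forall t : R, is_derive t (1 : R) w1 (2 *: cross (w2 t) (w3 t))) ->
  (forall t : R, is_derive t (1 : R) w2 (2 *: cross (w1 t) (w3 t))) ->
  (forall t : R, is_derive t (1 : R) w3 (- (2 *: cross (w1 t) (w2 t)))) ->
  (forall t : R, is_derive t (1 : R) w4
     (cross (w1 t) (w5 t) + cross (w2 t) (w5 t) - cross (w3 t) (w4 t))) ->
  (forall t : R, is_derive t (1 : R) w5
     (- cross (w1 t) (w4 t) + cross (w2 t) (w4 t) + cross (w3 t) (w5 t))) ->
  (forall t : R, is_derive t (1 : R) w6 (cross (w4 t) (w5 t))) ->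
  forall y1 y2 t : R,
    let F := paramM w1 w2 w3 w4 w5 w6 in
    let Fy1 := derive1 (fun s => F s y2 t) y1 in
    let Fy2 := derive1 (fun s => F y1 s t) y2 in
    let Ft := derive1 (fun s => F y1 y2 s) t in
    (* nonsingular point: the differential of the parametrization has rank 3 *)
    row_free (mx3 Fy1 Fy2 Ft) ->
    associative_plane Fy1 Fy2 Ft.
Proof.
move=> H1 H2 H3 H4 H5 H6 y1 y2 t F Fy1 Fy2 Ft _.
have -> : Ft = cross Fy1 Fy2.
  rewrite /Ft /Fy1 /Fy2 /F (@dT R w1 w2 w3 w4 w5 w6 y1 y2 t _ _ _ _ _ _ H1 H2 H3 H4 H5 H6).
  rewrite dY1 dY2.
  apply: row7; rewrite !(coordD, coordB, coordN, coordZ, cross1, cross2, cross3, cross4, cross5, cross6, cross7); by field.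
exact: assoc_cross.
Qed.
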